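(* For all $m\ge2$, $n\ge1$, $\mathrm{int}(CP_{m,n})\subseteq SCP_{m,n}\cap N^+_{m,n}$, where the interior is taken in $\mathbb{S}_{m,n}$.
   Context: $\mathbb{S}_{m,n}$ is the (finite-dimensional) space of symmetric real $m$th order $n$-dimensional tensors with its Euclidean topology. $(u^m)_{i_1\ldots i_m}=u_{i_1}\cdots u_{i_m}$. $CP_{m,n}$ is the set of $\mathcal{A}=\sum_{k=1}^r(u^{(k)})^m$ with $u^{(k)}\in\mathbb{R}^n_+$; $SCP_{m,n}$ is the set of such $\mathcal{A}$ admitting a decomposition with $\mathrm{span}\{u^{(1)},\dots,u^{(r)}\}=\mathbb{R}^n$. $N^+_{m,n}$ is the set of tensors all of whose entries are positive. *)

(* Defs.v *)
From Stdlib Require Import Reals Lra List Permutation.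
Import ListNotations.
Open Scope R_scope.

(* A real m-th order n-dimensional tensor is modelled as a function from
   index lists to R; only "valid" index lists (length m, entries < n) matter. *)
Definition tensor := list nat -> R.

Definition valid_idx (m n : nat) (l : list nat) : Prop :=
  length l = m /\ Forall (fun i => (i < n)%nat) l.

Definition symmetric_tensor (m n : nat) (A : tensor) : Prop :=
  forall l l', valid_idx m n l -> Permutation l l' -> A l = A l'.

(* vectors of R^n : nat -> R, coordinates 0..n-1 *)
Definition nonneg_vec (n : nat) (u : nat -> R) : Prop :=
  forall i, (i < n)%nat -> 0 <= u i.

Definition pow_tensor (u : nat -> R) : tensor :=
  fun l => fold_right (fun i acc => u i * acc) 1 l.

Definition sumR (xs : list R) : R := fold_right Rplus 0 xs.

Definition decomp (m n : nat) (A : tensor) (us : list (nat -> R)) : Prop :=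
  Forall (nonneg_vec n) us /\
  forall l, valid_idx m n l -> A l = sumR (map (fun u => pow_tensor u l) us).

Definition CP_tensor (m n : nat) (A : tensor) : Prop :=
  symmetric_tensor m n A /\ exists us, decomp m n A us.

Definition spans_Rn (n : nat) (us : list (nat -> R)) : Prop :=
  forall v : nat -> R, exists c : nat -> R, forall i, (i < n)%nat ->
    v i = sumR (map (fun k => c k * (nth k us (fun _ => 0)) i)
                    (seq 0 (length us))).

Definition SCP_tensor (m n : nat) (A : tensor) : Prop :=
  symmetric_tensor m n A /\ exists us, decomp m n A us /\ spans_Rn n us.

Definition Nplus_tensor (m n : nat) (A : tensor) : Prop :=
  forall l, valid_idx m n l -> 0 < A l.

(* Interior of CP_{m,n} in S_{m,n}, with the (equivalent, finite-dimensional)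
   sup-norm topology on entries. *)
Definition interior_CP (m n : nat) (A : tensor) : Prop :=
  symmetric_tensor m n A /\
  exists eps, 0 < eps /\
    forall B, symmetric_tensor m n B ->
      (forall l, valid_idx m n l -> Rabs (B l - A l) < eps) -> CP_tensor m n B.

(* Main.v *)
Require Import Defs.
From Stdlib Require Import Reals Lra Lia List Permutation Arith.
Import ListNotations.
Open Scope R_scope.

Lemma pow_perm u l l' : Permutation l l' -> pow_tensor u l = pow_tensor u l'.
Proof.
  induction 1; unfold pow_tensor in *; simpl; try ring; try lra.
  rewrite IHPermutation; reflexivity.
Qed.

Lemma sumR_app xs ys : sumR (xs ++ ys) = sumR xs + sumR ys.
Proof. induction xs; simpl; [ring|rewrite IHxs; ring]. Qed.

Lemma sumR_le {T} (f g : T -> R) l :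
  (forall x, In x l -> f x <= g x) -> sumR (map f l) <= sumR (map g l).
Proof.
  induction l; simpl; intros H; [lra|].
  pose proof (H a (or_introl eq_refl)).
  assert (sumR (map f l) <= sumR (map g l)) by (apply IHl; auto). lra.
Qed.

Lemma sumR_delta (f : nat -> R) j len : forall a,
  sumR (map (fun k => if Nat.eqb j k then f k else 0) (seq a len)) =
  if andb (Nat.leb a j) (Nat.ltb j (a + len)) then f j else 0.
Proof.
  induction len; intros a; simpl.
  - destruct (Nat.leb a j) eqn:E1; destruct (Nat.ltb j (a+0)) eqn:E2; simpl; auto.
    apply Nat.leb_le in E1; apply Nat.ltb_lt in E2; lia.
  - rewrite IHlen.
    destruct (Nat.eqb j a) eqn:E.
    + apply Nat.eqb_eq in E; subst.
      replace (Nat.leb (S a) a) with false by (symmetry; apply Nat.leb_gt; lia).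
      replace (Nat.leb a a) with true by (symmetry; apply Nat.leb_le; lia).
      replace (Nat.ltb a (a + S len)) with true by (symmetry; apply Nat.ltb_lt; lia).
      simpl; ring.
    + apply Nat.eqb_neq in E.
      destruct (Nat.leb (S a) j) eqn:E1; destruct (Nat.ltb j (S a + len)) eqn:E2;
      destruct (Nat.leb a j) eqn:E3; destruct (Nat.ltb j (a + S len)) eqn:E4; simpl;
      repeat match goal with
      | H : Nat.leb _ _ = true |- _ => apply Nat.leb_le in H
      | H : Nat.leb _ _ = false |- _ => apply Nat.leb_gt in H
      | H : Nat.ltb _ _ = true |- _ => apply Nat.ltb_lt in H
      | H : Nat.ltb _ _ = false |- _ => apply Nat.ltb_ge in H
      end; try lia; ring.
Qed.

Lemma pow_nonneg n u l : nonneg_vec n u -> Forall (fun i => (i < n)%nat) l ->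
  0 <= pow_tensor u l.
Proof.
  intros Hu; induction 1; unfold pow_tensor in *; simpl; [lra|].
  apply Rmult_le_pos; auto.
Qed.

Lemma pow_01 u l : (forall j, 0 <= u j <= 1) -> 0 <= pow_tensor u l <= 1.
Proof.
  intros Hu; induction l; unfold pow_tensor in *; simpl; [lra|].
  destruct (Hu a); destruct IHl; split; [apply Rmult_le_pos; auto|].
  fold (pow_tensor u l) in *. apply Rle_trans with (1 * 1); [apply Rmult_le_compat; auto | lra].
Qed.

Lemma sumR_nonneg_pow n us l : Forall (nonneg_vec n) us ->
  Forall (fun i => (i < n)%nat) l ->
  0 <= sumR (map (fun u => pow_tensor u l) us).
Proof.
  intros H Hl; induction H; simpl; [lra|].
  pose proof (pow_nonneg _ _ _ H Hl). lra.
Qed.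

Theorem mainTheorem13 (m n : nat) (hm : (2 <= m)%nat) (hn : (1 <= n)%nat)
  (A : tensor) (hA : interior_CP m n A) :
  SCP_tensor m n A /\ Nplus_tensor m n A.
Proof.
  destruct hA as [HsA [eps [Heps Hint]]].
  split.
  - split; [exact HsA|].
    set (c := eps / (eps + 2)).
    assert (Hc0 : 0 < c) by (unfold c; apply Rdiv_lt_0_compat; lra).
    assert (Hc1 : c < 1) by (unfold c; apply Rmult_lt_reg_r with (eps+2); [lra|];
      unfold Rdiv; rewrite Rmult_assoc, Rinv_l; lra).
    assert (Hce : c < eps) by (unfold c; apply Rmult_lt_reg_r with (eps+2); [lra|];
      unfold Rdiv; rewrite Rmult_assoc, Rinv_l; nra).
    set (ce := fun i : nat => fun j : nat => if Nat.eqb j i then c else 0).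
    set (es := map ce (seq 0 n)).
    set (D := fun l => sumR (map (fun u => pow_tensor u l) es)).
    assert (HD : forall l, (1 <= length l)%nat -> 0 <= D l <= c).
    { intros l Hl. destruct l as [|j t]; simpl in Hl; [lia|].
      unfold D, es. rewrite map_map. split.
      - replace 0 with (sumR (map (fun _ : nat => 0) (seq 0 n))).
        2:{ clear. generalize 0%nat. induction n; simpl; auto. intros; rewrite IHn; ring. }
        apply sumR_le. intros i _. unfold pow_tensor; simpl.
        apply Rmult_le_pos.
        + unfold ce; destruct (Nat.eqb j i); lra.
        + apply (pow_01 (ce i)). intros k; unfold ce; destruct (Nat.eqb k i); lra.
      - apply Rle_trans with
          (sumR (map (fun k => if Nat.eqb j k then c else 0) (seq 0 n))).
        + apply sumR_le. intros i _. unfold pow_tensor; simpl.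
          fold (pow_tensor (ce i) t).
          assert (H01 := pow_01 (ce i) t).
          assert (H01' : 0 <= pow_tensor (ce i) t <= 1).
          { apply H01. intros k; unfold ce; destruct (Nat.eqb k i); lra. }
          change (ce i j * pow_tensor (ce i) t <= (if Nat.eqb j i then c else 0)).
          assert (Hcij : ce i j = if Nat.eqb j i then c else 0) by reflexivity.
          rewrite Hcij. destruct (Nat.eqb j i); nra.
        + rewrite (sumR_delta (fun _ => c)).
          destruct (andb _ _); lra. }
    set (B := fun l => A l - D l).
    assert (HsB : symmetric_tensor m n B).
    { intros l l' Hv Hp. unfold B, D. rewrite (HsA l l' Hv Hp). f_equal.
      f_equal. apply map_ext. intros u. apply pow_perm; auto. }
    destruct (Hint B HsB) as [_ [us [Hus HBd]]].
    { intros l [Hlen _]. unfold B.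
      replace (A l - D l - A l) with (- D l) by ring.
      rewrite Rabs_Ropp. rewrite Rabs_right.
      - destruct (HD l); lia || lra.
      - destruct (HD l); lia || lra. }
    exists (es ++ us). split; [split|].
    + apply Forall_app; split; auto.
      unfold es. apply Forall_forall. intros u Hu. apply in_map_iff in Hu.
      destruct Hu as [i [<- _]]. intros k _. unfold ce; destruct (Nat.eqb k i); lra.
    + intros l Hv. rewrite map_app, sumR_app.
      rewrite <- (HBd l Hv). unfold B. fold (D l). ring.
    + intros v. exists (fun k => if Nat.ltb k n then v k / c else 0).
      intros i Hi. rewrite length_app.
      assert (Hlen : length es = n) by (unfold es; rewrite length_map, length_seq; auto).
      rewrite Hlen, seq_app, map_app, sumR_app.
      replace (sumR (map (fun k => (if Nat.ltb k n then v k / c else 0) *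
                  nth k (es ++ us) (fun _ => 0) i) (seq (0 + n) (length us)))) with 0.
      2:{ replace 0 with (sumR (map (fun _ : nat => 0) (seq (0+n) (length us)))) at 1.
          2:{ clear. generalize (0+n)%nat. induction (length us); simpl; auto.
              intros; rewrite IHn0; ring. }
          f_equal. apply map_ext_in. intros k Hk. apply in_seq in Hk.
          replace (Nat.ltb k n) with false by (symmetry; apply Nat.ltb_ge; lia). ring. }
      rewrite Rplus_0_r.
      rewrite (map_ext_in _ (fun k => if Nat.eqb i k then v k else 0)).
      * rewrite sumR_delta.
        replace (Nat.leb 0 i) with true by (symmetry; apply Nat.leb_le; lia).
        replace (Nat.ltb i (0 + n)) with true by (symmetry; apply Nat.ltb_lt; lia).
        reflexivity.
      * intros k Hk. apply in_seq in Hk.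
        replace (Nat.ltb k n) with true by (symmetry; apply Nat.ltb_lt; lia).
        rewrite app_nth1 by lia. unfold es.
        rewrite nth_indep with (d' := ce 0%nat) by (rewrite length_map, length_seq; lia).
        rewrite map_nth, seq_nth by lia. simpl. unfold ce.
        destruct (Nat.eqb i k); field; lra.
  - intros l Hv.
    set (B := fun l => A l - eps / 2).
    assert (HsB : symmetric_tensor m n B).
    { intros l1 l2 Hv1 Hp. unfold B. rewrite (HsA l1 l2 Hv1 Hp). auto. }
    destruct (Hint B HsB) as [_ [us [Hus HBd]]].
    { intros l0 _. unfold B. replace (A l0 - eps/2 - A l0) with (-(eps/2)) by ring.
      rewrite Rabs_Ropp, Rabs_right; lra. }
    pose proof (HBd l Hv). destruct Hv as [_ Hf].
    pose proof (sumR_nonneg_pow n us l Hus Hf). unfold B in *. lra.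
Qed.
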